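(* Let $p$ be a prime and $(G,\theta)$ an oriented profinite group. Then $(G,\theta)$ is cyclotomic if and only if for every natural number $n$ and every closed subgroup $H\le G$, the kernel of the map $H^2(H,\mathbb{Z}_p(1)/p^{n-1})\to H^2(H,\mathbb{Z}_p(1)/p^{n})$ induced by the injection in the short exact sequence $0\to\mathbb{Z}_p(1)/p^{n-1}\to\mathbb{Z}_p(1)/p^{n}\to\mathbb{Z}_p(1)/p\to0$ is trivial.
   Context: An orientation of a profinite group $G$ is a continuous homomorphism $\theta:G\to\mathbb{Z}_p^\times$ whose image lies in $1+p\mathbb{Z}_p$ (so the induced action on $\mathbb{F}_p$ is trivial). $\mathbb{Z}_p(1)$ is $\mathbb{Z}_p$ with $G$-action $g.x=\theta(g)x$, and $\mathbb{Z}_p(1)/p^m=\mathbb{Z}_p(1)/p^m\mathbb{Z}_p(1)$; the injection $\mathbb{Z}_p(1)/p^{n-1}\to\mathbb{Z}_p(1)/p^n$ is induced by multiplication by $p$. $(G,\theta)$ is cyclotomic if for every closed subgroup $H\le G$ and every $m$, the natural map $H^1(H,\mathbb{Z}_p(1)/p^m)\to H^1(H,\mathbb{Z}_p(1)/p)$ of continuous cohomology is surjective. *)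

(* Defs.v *)
From HB Require Import structures.
From mathcomp Require Import all_boot all_order all_algebra.
From mathcomp Require Import boolp classical_sets topology.
Set Implicit Arguments. Unset Strict Implicit. Unset Printing Implicit Defensive.
Import Order.TTheory GRing.Theory Num.Theory.
Local Open Scope classical_set_scope.
Local Open Scope ring_scope.

Definition is_profinite_group (T : topologicalType)
    (mul : T -> T -> T) (one : T) (inv : T -> T) : Prop :=
  [/\ (forall x y z, mul x (mul y z) = mul (mul x y) z),
      (forall x, mul one x = x),
      (forall x, mul (inv x) x = one),
      continuous (fun xy : T * T => mul xy.1 xy.2)
    & [/\ continuous inv, compact [set: T], hausdorff_space T
         & totally_disconnected [set: T]]].

Definition is_closed_subgroup (T : topologicalType)
    (mul : T -> T -> T) (one : T) (inv : T -> T) (H : set T) : Prop :=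
  [/\ closed H, H one,
      (forall x y, H x -> H y -> H (mul x y)) & (forall x, H x -> H (inv x))].

(* f : X -> int, read as a map into Z/q (discrete), is continuous on A
   (for the subspace topology), i.e. locally constant modulo q on A. *)
Definition loc_const_mod {X : topologicalType} (q : int) (A : set X)
    (f : X -> int) : Prop :=
  forall x, A x -> exists U : set X,
    [/\ open U, U x & forall y, A y -> U y -> (f y == f x %[mod q])%Z].

(* x : nat -> int represents an element of Z_p = lim Z/p^k,
   x k being the canonical representative in [0, p^k) of its image in Z/p^k. *)
Definition is_Zp (p : nat) (x : nat -> int) : Prop :=
  forall k, (0 <= x k < (p ^ k)%:Z) /\ (x k.+1 == x k %[mod (p ^ k)%:Z])%Z.

(* An orientation theta : G -> Z_p^x, continuous homomorphism with image in
   1 + pZ_p.  Continuity into the inverse limit = continuity of every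
   projection G -> Z/p^k (discrete). *)
Definition is_orientation (p : nat) (T : topologicalType)
    (mul : T -> T -> T) (theta : T -> nat -> int) : Prop :=
  [/\ (forall g, is_Zp p (theta g)),
      (forall g h k,
          (theta (mul g h) k == theta g k * theta h k %[mod (p ^ k)%:Z])%Z),
      (forall k, loc_const_mod (p ^ k)%:Z [set: T] (fun g => theta g k))
    & (forall g, theta g 1%N = 1)].

(* Module Z/p^m with action g.x = theta(g) x; elements represented by ints,
   all identities taken modulo p^m.  Inhomogeneous continuous cochains on H
   are represented by int-valued functions on T (resp. T*T), only their
   values on H (resp. H x H) modulo p^m mattering. *)
Section Cohomology.
Variables (p : nat) (T : topologicalType) (mul : T -> T -> T)
  (theta : T -> nat -> int) (H : set T).

Definition modulus (m : nat) : int := (p ^ m)%:Z.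

Definition cochain1 (m : nat) (c : T -> int) : Prop :=
  loc_const_mod (modulus m) H c.

Definition cochain2 (m : nat) (c : T * T -> int) : Prop :=
  loc_const_mod (modulus m) (H `*` H) c.

Definition cocycle1 (m : nat) (c : T -> int) : Prop :=
  cochain1 m c /\
  forall g h, H g -> H h ->
    (c (mul g h) == c g + theta g m * c h %[mod modulus m])%Z.

Definition coboundary1 (m : nat) (c : T -> int) : Prop :=
  exists a : int, forall g, H g ->
    (c g == theta g m * a - a %[mod modulus m])%Z.

Definition cocycle2 (m : nat) (c : T * T -> int) : Prop :=
  cochain2 m c /\
  forall g h k, H g -> H h -> H k ->
    (theta g m * c (h, k) - c (mul g h, k) + c (g, mul h k) - c (g, h)
       == 0 %[mod modulus m])%Z.

Definition coboundary2 (m : nat) (c : T * T -> int) : Prop :=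
  exists b : T -> int, cochain1 m b /\
    forall g h, H g -> H h ->
      (c (g, h) == theta g m * b h - b (mul g h) + b g %[mod modulus m])%Z.

(* H^1(H, Z_p(1)/p^m) -> H^1(H, Z_p(1)/p) (induced by reduction mod p)
   is surjective. *)
Definition H1_reduction_surjective (m : nat) : Prop :=
  forall c, cocycle1 1 c ->
    exists c', cocycle1 m c' /\ coboundary1 1 (fun g => c' g - c g).

(* The map H^2(H, Z_p(1)/p^(n-1)) -> H^2(H, Z_p(1)/p^n) induced by
   multiplication by p has trivial kernel. *)
Definition H2_mulp_injective (n : nat) : Prop :=
  forall c, cocycle2 n.-1 c ->
    coboundary2 n (fun gh => (p%:Z) * c gh) -> coboundary2 n.-1 c.

End Cohomology.

Definition cyclotomic (p : nat) (T : topologicalType) (mul : T -> T -> T)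
    (one : T) (inv : T -> T) (theta : T -> nat -> int) : Prop :=
  forall H : set T, is_closed_subgroup mul one inv H ->
    forall m : nat, (1 <= m)%N -> H1_reduction_surjective p mul theta H m.

(* Main.v *)
Require Import Defs.
From HB Require Import structures.
From mathcomp Require Import all_boot all_order all_algebra.
From mathcomp Require Import boolp classical_sets topology.
From mathcomp Require Import ring.
Set Implicit Arguments. Unset Strict Implicit. Unset Printing Implicit Defensive.
Import Order.TTheory GRing.Theory Num.Theory.
Local Open Scope classical_set_scope.
Local Open Scope ring_scope.

Lemma fst_cont (T U : topologicalType) : continuous (@fst T U).
Proof. move=> x; exact: cvg_fst. Qed.
Lemma snd_cont (T U : topologicalType) : continuous (@snd T U).
Proof. move=> x; exact: cvg_snd. Qed.
Lemma openX (T U : topologicalType) (A : set T) (B : set U) :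
  open A -> open B -> open (A `*` B).
Proof.
move=> oA oB.
have -> : A `*` B = (fst @^-1` A) `&` (snd @^-1` B).
  by apply/seteqP; split=> -[x y].
apply: openI; [move/continuousP: (@fst_cont T U) | move/continuousP: (@snd_cont T U)]; apply => //.
Qed.

Lemma loc_const_dvd (X : topologicalType) (d d' : int) (A : set X) f :
  loc_const_mod d A f -> (d' %| d)%Z -> loc_const_mod d' A f.
Proof.
move=> h hd x Ax; case: (h x Ax) => U [oU Ux hU]; exists U; split=> // y Ay Uy.
move: (hU y Ay Uy); rewrite !eqz_mod_dvd; exact: dvdz_trans.
Qed.

Lemma modS p n : modulus p n.+1 = p%:Z * modulus p n.
Proof. by rewrite /modulus expnS PoszM. Qed.

Lemma mod1 p : modulus p 1 = p%:Z.
Proof. by rewrite /modulus expn1. Qed.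

Lemma th_step p (T : topologicalType) (mul : T -> T -> T) theta g n :
  is_orientation p mul theta -> (modulus p n %| theta g n.+1 - theta g n)%Z.
Proof. by case=> thZ _ _ _; have := (thZ g n).2; rewrite eqz_mod_dvd. Qed.

Lemma th_one p (T : topologicalType) (mul : T -> T -> T) theta g k :
  is_orientation p mul theta -> (p%:Z %| theta g k.+1 - 1)%Z.
Proof.
move=> hO; have [_ _ _ th1] := hO.
elim: k => [|k IH]; first by rewrite th1 subrr dvdz0.
have -> : theta g k.+2 - 1 = (theta g k.+2 - theta g k.+1) + (theta g k.+1 - 1) by ring.
apply: rpredD => //; apply: dvdz_trans (th_step g k.+1 hO).
by rewrite modS; apply: dvdz_mulr; apply: dvdzz.
Qed.

Lemma dir1 (p : nat) (T : topologicalType) (mul : T -> T -> T) theta (H : set T) n :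
  prime p -> is_orientation p mul theta ->
  (forall x y, H x -> H y -> H (mul x y)) ->
  H1_reduction_surjective p mul theta H n.+1 -> H2_mulp_injective p mul theta H n.+1.
Proof.
move=> pp hO Hmul surj c /= [cch ccoc] [b [bch bcob]].
have [thZ thM thC th1] := hO.
have p0 : p%:Z != 0 by rewrite eqz_nat -lt0n prime_gt0.
have bcoc1 : cocycle1 p mul theta H 1 b.
  split.
    apply: loc_const_dvd bch _; rewrite mod1 modS; apply: dvdz_mulr; apply: dvdzz.
  move=> g h Hg Hh; rewrite th1 eqz_mod_dvd mod1.
  have := bcob g h Hg Hh; rewrite eqz_mod_dvd modS => h1.
  have {}h1 := dvdz_trans (dvdz_mulr _ (dvdzz _)) h1.
  have -> : b (mul g h) - (b g + 1 * b h) =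
    (p%:Z * c (g, h) - (theta g n.+1 * b h - b (mul g h) + b g))
    - p%:Z * c (g, h) + (theta g n.+1 - 1) * b h by ring.
  apply: rpredD; [apply: rpredB|].
  - by [].
  - by apply: dvdz_mulr; apply: dvdzz.
  - by apply: dvdz_mulr; apply: th_one hO.
case: (surj b bcoc1) => c' [[c'ch c'coc] [a ha]].
have hpd : forall g, H g -> (p%:Z %| b g - c' g)%Z.
  move=> g Hg; have := ha g Hg; rewrite th1 mul1r subrr eqz_mod_dvd subr0 mod1.
  by rewrite -rpredN opprB.
pose e := fun g => ((b g - c' g) %/ p)%Z.
have he : forall g, H g -> b g = c' g + p%:Z * e g.
  move=> g Hg; rewrite /e mulrC divzK; [ring | exact: hpd].
exists e; split.
  move=> x Hx; case: (bch x Hx) => U1 [oU1 U1x hU1]; case: (c'ch x Hx) => U2 [oU2 U2x hU2].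
  exists (U1 `&` U2); split => //; first exact: openI.
  move=> y Hy [U1y U2y]; rewrite eqz_mod_dvd -(dvdz_mul2l p0) -modS.
  have := hU1 y Hy U1y; have := hU2 y Hy U2y; rewrite !eqz_mod_dvd (he y Hy) (he x Hx) => h2 h1.
  have -> : p%:Z * (e y - e x) = (c' y + p%:Z * e y - (c' x + p%:Z * e x)) - (c' y - c' x) by ring.
  by apply: rpredB.
move=> g h Hg Hh; rewrite eqz_mod_dvd -(dvdz_mul2l p0) -modS.
have := bcob g h Hg Hh; have := c'coc g h Hg Hh; have := th_step g n hO.
rewrite !eqz_mod_dvd (he g Hg) (he h Hh) (he (mul g h) (Hmul _ _ Hg Hh)) => h3 h2 h1.
have -> : p%:Z * (c (g, h) - (theta g n * e h - e (mul g h) + e g)) =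
   (p%:Z * c (g, h) - (theta g n.+1 * (c' h + p%:Z * e h) - (c' (mul g h) + p%:Z * e (mul g h)) + (c' g + p%:Z * e g)))
   + p%:Z * ((theta g n.+1 - theta g n) * e h)
   - (c' (mul g h) - (c' g + theta g n.+1 * c' h)) by ring.
apply: rpredB => //; apply: rpredD => //.
rewrite modS; apply: dvdz_mul; first exact: dvdzz.
exact: dvdz_mulr.
Qed.

Lemma dir2 (p : nat) (T : topologicalType) (mul : T -> T -> T) theta (H : set T) n :
  prime p -> is_orientation p mul theta ->
  (forall x y z, mul x (mul y z) = mul (mul x y) z) ->
  continuous (fun xy : T * T => mul xy.1 xy.2) ->
  (forall x y, H x -> H y -> H (mul x y)) ->
  H2_mulp_injective p mul theta H n.+1 -> H1_reduction_surjective p mul theta H n.+1.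
Proof.
move=> pp hO massoc mulC Hmul inj c [cch ccoc].
have [thZ thM thC th1] := hO.
have p0 : p%:Z != 0 by rewrite eqz_nat -lt0n prime_gt0.
pose ch := fun g => (c g %% p)%Z.
have chc : forall g, (p%:Z %| ch g - c g)%Z.
  by move=> g; rewrite -eqz_mod_dvd /ch modz_mod.
have chloc : forall x, H x -> exists U : set T,
    [/\ open U, U x & forall y, H y -> U y -> ch y = ch x].
  move=> x Hx; case: (cch x Hx) => U [oU Ux hU]; exists U; split=> // y Hy Uy.
  by have := hU y Hy Uy; rewrite mod1 => /eqP.
have chcoc : forall g h, H g -> H h ->
    (p%:Z %| theta g n.+1 * ch h - ch (mul g h) + ch g)%Z.
  move=> g h Hg Hh; have := ccoc g h Hg Hh; rewrite th1 eqz_mod_dvd mod1 => h1.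
  have -> : theta g n.+1 * ch h - ch (mul g h) + ch g =
    (theta g n.+1 - 1) * ch h + (ch h - c h) - (ch (mul g h) - c (mul g h))
    + (ch g - c g) - (c (mul g h) - (c g + 1 * c h)) by ring.
  apply: rpredB; [apply: rpredD; [apply: rpredB; [apply: rpredD|]|]|] => //.
  by apply: dvdz_mulr; apply: th_one hO.
pose dl := fun gh : T * T => theta gh.1 n.+1 * ch gh.2 - ch (mul gh.1 gh.2) + ch gh.1.
pose z := fun gh => (dl gh %/ p)%Z.
have hz : forall g h, H g -> H h -> dl (g, h) = p%:Z * z (g, h).
  by move=> g h Hg Hh; rewrite /z mulrC divzK //; apply: chcoc.
have zcoc : cocycle2 p mul theta H n z.
  split.
    move=> [g h] [/= Hg Hh].
    case: (thC n.+1 g I) => A [oA Ag hA].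
    case: (chloc h Hh) => B1 [oB1 B1h hB1].
    case: (chloc g Hg) => B2 [oB2 B2g hB2].
    case: (chloc (mul g h) (Hmul _ _ Hg Hh)) => C [oC Cgh hC].
    exists (((A `&` B2) `*` B1) `&` ((fun xy : T * T => mul xy.1 xy.2) @^-1` C)).
    split.
    - apply: openI; first by apply: openX => //; apply: openI.
      by move/continuousP: mulC; apply.
    - by split.
    move=> [y1 y2] [/= Hy1 Hy2] [[[Ay1 B2y1] B1y2] /= Cy].
    rewrite eqz_mod_dvd -(dvdz_mul2l p0) -modS mulrBr -hz // -hz //.
    rewrite /dl /= (hB1 y2 Hy2 B1y2) (hB2 y1 Hy1 B2y1) (hC _ (Hmul _ _ Hy1 Hy2) Cy).
    have := hA y1 I Ay1; rewrite eqz_mod_dvd => h1.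
    have -> : theta y1 n.+1 * ch h - ch (mul g h) + ch g - (theta g n.+1 * ch h - ch (mul g h) + ch g)
       = (theta y1 n.+1 - theta g n.+1) * ch h by ring.
    exact: dvdz_mulr.
  move=> g h k Hg Hh Hk.
  have Hgh := Hmul _ _ Hg Hh; have Hhk := Hmul _ _ Hh Hk.
  rewrite eqz_mod_dvd -(dvdz_mul2l p0) -modS.
  have -> : p%:Z * (theta g n * z (h, k) - z (mul g h, k) + z (g, mul h k) - z (g, h) - 0)
     = - (p%:Z * ((theta g n.+1 - theta g n) * z (h, k)))
       + (theta g n.+1 * dl (h, k) - dl (mul g h, k) + dl (g, mul h k) - dl (g, h)).
    rewrite (hz h k) // (hz _ k Hgh) // (hz g _ Hg Hhk) (hz g h) //; ring.
  have -> : theta g n.+1 * dl (h, k) - dl (mul g h, k) + dl (g, mul h k) - dl (g, h)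
     = - ((theta (mul g h) n.+1 - theta g n.+1 * theta h n.+1) * ch k).
    rewrite /dl /= massoc; ring.
  apply: rpredD; rewrite rpredN.
    rewrite modS; apply: dvdz_mul; first exact: dvdzz.
    by apply: dvdz_mulr; apply: th_step.
  apply: dvdz_mulr; have := thM g h n.+1; rewrite eqz_mod_dvd; done.
have zcob : coboundary2 p mul theta H n.+1 (fun gh => p%:Z * z gh).
  exists ch; split.
    move=> x Hx; case: (chloc x Hx) => U [oU Ux hU]; exists U; split=> // y Hy Uy.
    by rewrite (hU y Hy Uy).
  by move=> g h Hg Hh; rewrite -hz.
have [e [ech ecob]] := inj z zcoc zcob.
exists (fun g => ch g - p%:Z * e g); split; [split|].
- move=> x Hx; case: (chloc x Hx) => U1 [oU1 U1x hU1]; case: (ech x Hx) => U2 [oU2 U2x hU2].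
  exists (U1 `&` U2); split => //; first exact: openI.
  move=> y Hy [U1y U2y]; rewrite eqz_mod_dvd (hU1 y Hy U1y).
  have := hU2 y Hy U2y; rewrite eqz_mod_dvd => h1.
  have -> : ch x - p%:Z * e y - (ch x - p%:Z * e x) = - (p%:Z * (e y - e x)) by ring.
  by rewrite rpredN modS; apply: dvdz_mul => //; apply: dvdzz.
- move=> g h Hg Hh; rewrite eqz_mod_dvd.
  have := ecob g h Hg Hh; rewrite eqz_mod_dvd => h1.
  have -> : ch (mul g h) - p%:Z * e (mul g h) - (ch g - p%:Z * e g + theta g n.+1 * (ch h - p%:Z * e h))
     = - dl (g, h) + p%:Z * (theta g n.+1 * e h - e (mul g h) + e g) by rewrite /dl /=; ring.
  rewrite hz //.
  have -> : - (p%:Z * z (g, h)) + p%:Z * (theta g n.+1 * e h - e (mul g h) + e g)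
     = - (p%:Z * (z (g, h) - (theta g n * e h - e (mul g h) + e g)))
       + p%:Z * ((theta g n.+1 - theta g n) * e h) by ring.
  rewrite modS; apply: rpredD; first rewrite rpredN.
    by apply: dvdz_mul => //; apply: dvdzz.
  apply: dvdz_mul; first exact: dvdzz.
  by apply: dvdz_mulr; apply: th_step.
- exists 0 => g Hg /=; rewrite th1 eqz_mod_dvd mod1.
  have -> : ch g - p%:Z * e g - c g - (1 * 0 - 0) = (ch g - c g) - p%:Z * e g by ring.
  by apply: rpredB => //; apply: dvdz_mulr; apply: dvdzz.
Qed.

Theorem mainTheorem8 (p : nat) (T : topologicalType)
    (mul : T -> T -> T) (one : T) (inv : T -> T) (theta : T -> nat -> int) :
  prime p ->
  is_profinite_group mul one inv ->
  is_orientation p mul theta ->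
  (cyclotomic p mul one inv theta <->
   (forall n : nat, (1 <= n)%N ->
      forall H : set T, is_closed_subgroup mul one inv H ->
        H2_mulp_injective p mul theta H n)).
Proof.
move=> pp [massoc _ _ mulC _] hO; split.
  move=> cyc [|n] // _ H hH; have [_ _ Hmul _] := hH.
  by apply: dir1 => //; apply: cyc.
move=> hinj H hH [|m] // _; have [_ _ Hmul _] := hH.
by apply: dir2 => //; apply: hinj.
Qed.
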